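(* Let $f,g:\mathbb{N}\to\mathbb{N}$ be functions with $n=o(f(n))$ and $g(n)=o(n^{2})$ as $n\to\infty$, and let $l:\mathbb{N}\to\mathbb{N}$ satisfy $f(n)\le l(n)\le g(n)$ for every $n\in\mathbb{N}$. Then $$r(l(n))\sim \frac{l(n)^{2}}{2\alpha_n}\qquad (n\to\infty).$$
   Context: For $n\in\mathbb{N}$ let $G_n=G(n,3,1)$ be the graph whose vertex set $V_n$ consists of all $3$-element subsets of $\{1,\dots,n\}$ (equivalently, $(0,1)$-vectors in $\mathbb{R}^n$ with exactly three ones), two vertices being adjacent if and only if the corresponding sets share exactly one element (equivalently, the vectors have scalar product $1$). Let $\alpha_n$ denote the independence number of $G(n,3,1)$. For $W\subseteq V_n$ let $r(W)$ be the number of edges of $G(n,3,1)$ with both endpoints in $W$, and for an integer $0\le l\le \binom{n}{3}$ let $r(l)=\min\{r(W): W\subseteq V_n,\ |W|=l\}$ (so $r(l(n))$ is computed in $G(n,3,1)$). *)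

(* Defs.v *)
From HB Require Import structures.
From mathcomp Require Import all_boot all_order all_algebra.
Set Implicit Arguments. Unset Strict Implicit. Unset Printing Implicit Defensive.
Import Order.TTheory GRing.Theory Num.Theory.

(* Vertex set V_n of G(n,3,1): 3-element subsets of {1..n} (modelled as 'I_n). *)
Definition Vn (n : nat) : {set {set 'I_n}} := [set A : {set 'I_n} | #|A| == 3].

Definition adj31 (n : nat) (A B : {set 'I_n}) : bool := #|A :&: B| == 1.

Definition indep31 (n : nat) (S : {set {set 'I_n}}) : bool :=
  (S \subset Vn n) && [forall A in S, forall B in S, ~~ adj31 A B].

Definition alpha31 (n : nat) : nat :=
  \max_(S : {set {set 'I_n}} | indep31 S) #|S|.

Definition rW (n : nat) (W : {set {set 'I_n}}) : nat :=
  #|[set e : {set {set 'I_n}} |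
      (e \subset W) &&
      [exists A : {set 'I_n}, exists B : {set 'I_n},
         (A \in Vn n) && (B \in Vn n) && (e == [set A; B]) && adj31 A B]]|.

(* r(l) = min { r(W) : W subset of V_n, |W| = l }.  The default value
   #|Vn n|^2 is an upper bound for every r(W), so it is a neutral element
   whenever some W of size l exists (i.e. l <= C(n,3)). *)
Definition rl (n l : nat) : nat :=
  \big[minn/ (#|Vn n| ^ 2)%N]_(W : {set {set 'I_n}} | (W \subset Vn n) && (#|W| == l)) rW W.

(* Main.v *)
Require Import Defs.
From HB Require Import structures.
From mathcomp Require Import all_boot all_order all_algebra.
From mathcomp Require Import zify ring lra.
Import Order.TTheory GRing.Theory Num.Theory.
Set Implicit Arguments. Unset Strict Implicit. Unset Printing Implicit Defensive.


Section Turan.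
Variables (T : finType) (e : rel T).
Hypothesis esym : symmetric e.

Definition opairs (W : {set T}) : {set T * T} :=
  [set p : T * T | (p.1 \in W) && (p.2 \in W) && e p.1 p.2].
Definition deg (W : {set T}) (u : T) : nat := #|[set w in W | e u w]|.

Lemma opairs_sum W : #|opairs W| = \sum_(u in W) deg W u.
Proof.
rewrite -sum1_card big_mkcond /=.
have := pair_big xpredT xpredT (fun u w => (((u \in W) && (w \in W) && e u w) : nat)).
move=> /= H.
transitivity (\sum_(p : T * T) (((p.1 \in W) && (p.2 \in W) && e p.1 p.2) : nat)).
  by apply: eq_bigr => p _; rewrite inE; case: ifP.
rewrite -H [RHS]big_mkcond /=; apply: eq_bigr => u _.
case: (boolP (u \in W)) => uW /=; last by rewrite big1.
rewrite /deg -sum1_card [RHS]big_mkcond /=.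
by apply: eq_bigr => w _; rewrite inE; case: (w \in W); case: (e u w).
Qed.

Definition indepS (S : {set T}) := [forall u in S, forall w in S, ~~ e u w].

Lemma turan (W : {set T}) (a : nat) :
  {in W, forall u, ~~ e u u} ->
  (forall S : {set T}, S \subset W -> indepS S -> #|S| <= a) ->
  #|W| ^ 2 <= a * (#|opairs W| + #|W|).
Proof.
have [m] := ubnP #|W|; elim: m W a => // m IH W a lt_m irr ind.
case: (set_0Vmem W) => [-> | [v0 v0W]]; first by rewrite cards0.
case: (arg_minnP (deg W) v0W) => v vW vmin.
set d := deg W v.
set Nb := [set w in W | e v w].
set N := v |: Nb.
set W' := W :\: N.
have vNb : v \notin Nb by rewrite inE (negbTE (irr v vW)) andbF.
have cN : #|N| = d.+1 by rewrite cardsU1 vNb.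
have NW : N \subset W by apply/subsetP => x; rewrite !inE => /orP [/eqP -> // | /andP []].
have cW' : #|W'| = #|W| - d.+1 by rewrite cardsD (setIidPr NW) cN.
have dW : d.+1 <= #|W| by rewrite -cN subset_leq_card.
have lt' : #|W'| < m by rewrite cW'; lia.
have irr' : {in W', forall u, ~~ e u u} by move=> u; rewrite inE => /andP [_ /irr].
have ind' : forall S : {set T}, S \subset W' -> indepS S -> #|S| <= a.-1.
  move=> S SW' iS.
  have vS : v \notin S.
    by apply/negP => /(subsetP SW'); rewrite !inE eqxx.
  have : #|v |: S| <= a.
    apply: ind.
      apply/subsetP => x; rewrite in_setU1 => /orP [/eqP -> // | /(subsetP SW')].
      by rewrite inE => /andP [].
    apply/forall_inP => x xS; apply/forall_inP => y yS.
    have ev : forall z, z \in S -> ~~ e v z.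
      move=> z /(subsetP SW'); rewrite !inE negb_or => /andP [/andP [_ H] zW].
      by move: H; rewrite zW.
    move: xS yS; rewrite !in_setU1 => /orP [/eqP -> | xS] /orP [/eqP -> | yS].
    - exact: irr.
    - exact: ev.
    - by rewrite esym; apply: ev.
    - by move/forall_inP: iS => /(_ x xS) /forall_inP /(_ y yS).
  by rewrite cardsU1 vS; lia.
have IHW := IH W' a.-1 lt' irr' ind'.
have Osplit : d * d.+1 + #|opairs W'| <= #|opairs W|.
  rewrite !opairs_sum [X in _ <= X](big_setID N) /=.
  have -> : W :&: N = N by apply/setIidPr.
  apply: leq_add.
    rewrite mulnC -cN -sum_nat_const; apply: leq_sum => u uN.
    exact: vmin (subsetP NW u uN).
  apply: leq_sum => u _; apply: subset_leq_card; apply/subsetP => x.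
  by rewrite !inE => /andP [/andP [_ ->] ->].
have a0 : 0 < a.
  have := ind [set v]; rewrite cards1; apply.
    by rewrite sub1set.
  by apply/forall_inP => x; rewrite inE => /eqP ->; apply/forall_inP => y; rewrite inE => /eqP ->; apply: irr.
move: IHW Osplit dW; rewrite cW'.
set O' := #|opairs W'|; set O := #|opairs W|; set w := #|W|.
move=> IHW Os dW.
clear ind' ind; case: a a0 IHW => // a' _ /= IHW.
set t := w - d.+1 in IHW *.
have wt : w = t + d.+1 by rewrite /t; lia.
rewrite wt.
suff : (t + d.+1) ^ 2 <= a'.+1 * (O' + t + d.+1 ^ 2).
  move=> H; apply: (leq_trans H); apply: leq_mul => //.
  have : d.+1 ^ 2 = d * d.+1 + d.+1 by rewrite mulnC; lia.
  lia.
case: a' IHW => [|a'] IHW.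
  have t0 : t = 0 by move: IHW; rewrite mul0n; lia.
  by rewrite t0 mul1n; lia.
have key : a'.+1 * (t + d.+1) ^ 2 <= t ^ 2 + a'.+1 * a'.+2 * d.+1 ^ 2 + a'.+1 * t ^ 2.
  have : 2 * a'.+1 * t * d.+1 <= t ^ 2 + a'.+1 ^ 2 * d.+1 ^ 2.
    have h : forall x y : nat, 2 * x * y <= x ^ 2 + y ^ 2.
      by move=> x y; have := (nat_AGM2 x y).1; rewrite sqrnD; lia.
    by have := h t (a'.+1 * d.+1); rewrite expnMn; lia.
  nia.
have h2 : a'.+1 * (t + d.+1) ^ 2 <= a'.+1 * (a'.+2 * (O' + t + d.+1 ^ 2)).
  apply: (leq_trans key).
  have : a'.+2 * t ^ 2 <= a'.+2 * (a'.+1 * (O' + t)) by rewrite leq_mul2l IHW orbT.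
  nia.
by rewrite leq_pmul2l in h2.
Qed.
End Turan.


Lemma adj31_sym n : symmetric (@adj31 n).
Proof. by move=> A B; rewrite /adj31 setIC. Qed.

Lemma adj31_irr n (A : {set 'I_n}) : A \in Vn n -> ~~ adj31 A A.
Proof. by rewrite /adj31 /Vn inE setIid => /eqP ->. Qed.

Lemma handshake n (W : {set {set 'I_n}}) : W \subset Vn n ->
  (rW W * 2 = #|opairs (@adj31 n) W|)%N.
Proof.
move=> WV.
set O := opairs (@adj31 n) W.
set B := [set p : {set 'I_n} * {set 'I_n} | (enum_rank p.1 < enum_rank p.2)%N].
have neq : forall p, p \in O -> p.1 != p.2.
  move=> [a b]; rewrite inE /= => /andP [/andP [aW bW] ab].
  by apply/eqP => eab; move: ab; rewrite eab; apply/negP/adj31_irr/(subsetP WV).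
have c1 : #|O :&: B| = rW W.
  rewrite /rW -(card_in_imset (f := fun p => [set p.1; p.2])).
    apply: eq_card => x; rewrite inE; apply/imsetP/andP.
      move=> [[a b]]; rewrite !inE /= => /andP [/andP [/andP [aW bW] ab] _] ->.
      split.
        by apply/subsetP => y; rewrite !inE => /orP [] /eqP ->.
      apply/existsP; exists a; apply/existsP; exists b.
      by rewrite (subsetP WV _ aW) (subsetP WV _ bW) eqxx ab.
    move=> [xW /existsP [a /existsP [b /andP [/andP [/andP [aV bV] /eqP xe] ab]]]].
    have aW : a \in W by apply: (subsetP xW); rewrite xe !inE eqxx.
    have bW : b \in W by apply: (subsetP xW); rewrite xe !inE eqxx orbT.
    have ne : a != b by apply/eqP => eab; move: ab; rewrite eab; apply/negP/adj31_irr.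
    case: (ltngtP (enum_rank a) (enum_rank b)) => h.
    - by exists (a, b); rewrite // !inE /= aW bW ab h.
    - exists (b, a); last by rewrite xe setUC.
      by rewrite !inE /= aW bW adj31_sym ab h.
    - by move/val_inj/enum_rank_inj: h => h; rewrite h eqxx in ne.
  move=> [a b] [a' b']; rewrite !inE /= => /andP [/andP [_ ab] r1] /andP [/andP [_ ab'] r2] E.
  have ina : a \in [set a'; b'] by rewrite -E !inE eqxx.
  have inb : b \in [set a'; b'] by rewrite -E !inE eqxx orbT.
  have nab : a != b by apply/eqP => eab; move: r1; rewrite eab ltnn.
  move: ina inb; rewrite !inE => /orP [/eqP ea | /eqP ea] /orP [/eqP eb | /eqP eb].
  - by rewrite ea eb eqxx in nab.
  - by rewrite ea eb.
  - by move: r1 r2; rewrite ea eb; lia.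
  - by rewrite ea eb eqxx in nab.
have c2 : #|O :\: B| = #|O :&: B|.
  have swK : cancel (fun p : {set 'I_n} * {set 'I_n} => (p.2, p.1)) (fun p => (p.2, p.1)) by case.
  rewrite -(card_imset _ (can_inj swK)).
  apply: eq_card => -[a b]; rewrite !inE /=; apply/imsetP/andP.
    move=> [[a' b']]; rewrite !inE /= => /andP [nB /andP [/andP [aW bW] ab]] [-> ->].
    rewrite bW aW adj31_sym ab; split => //.
    have ne : a' != b' by apply: (neq (a', b')); rewrite inE /= aW bW ab.
    move: nB; rewrite -leqNgt leq_eqVlt => /orP [/eqP h|//].
    by move/val_inj/enum_rank_inj: h => h; rewrite h eqxx in ne.
  move=> [/andP [/andP [aW bW] ab] r].
  exists (b, a) => //; rewrite !inE /= bW aW adj31_sym ab /=.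
  by rewrite -leqNgt (ltnW r).
by rewrite -(cardsID B O) c2 c1 muln2 addnn.
Qed.


Lemma indep_le_n n (S : {set {set 'I_n}}) : indep31 S -> (#|S| <= n)%N.
Proof.
move/andP => [SV /forall_inP iS].
pose M : 'M['F_2]_(#|S|, n) := (\matrix_(i, j) (((j \in enum_val (A := S) i) : nat)%:R))%R.
have MM : (M *m M^T = 1%:M)%R.
  apply/matrixP => i i'; rewrite !mxE.
  set A := enum_val i; set B := enum_val i'.
  have AS : A \in S by apply: enum_valP.
  have BS : B \in S by apply: enum_valP.
  transitivity (((#|A :&: B|)%:R : 'F_2)%R).
    rewrite -[#|A :&: B|]sum1_card natr_sum [RHS]big_mkcond; apply: eq_bigr => j _.
    rewrite !mxE inE; case: (j \in A); case: (j \in B) => /=;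
      by rewrite ?mulr1 ?mul0r ?mulr0.
  have A3 : #|A| = 3 by move: (subsetP SV _ AS); rewrite inE => /eqP.
  have B3 : #|B| = 3 by move: (subsetP SV _ BS); rewrite inE => /eqP.
  case: (eqVneq i i') => [eqi | ne].
    rewrite /B -eqi -/A setIid A3.
    by apply/eqP.
  have AB : A != B by apply: contra ne => /eqP /enum_val_inj ->.
  have n1 : #|A :&: B| != 1.
    by move/forall_inP: (iS A AS) => /(_ B BS).
  have le3 : (#|A :&: B| <= 3)%N by rewrite -A3 subset_leq_card // subsetIl.
  have n3 : #|A :&: B| != 3.
    apply: contra AB => /eqP h.
    have e1 : A :&: B = A by apply/eqP; rewrite eqEcard subsetIl h A3.
    have e2 : A :&: B = B by apply/eqP; rewrite eqEcard subsetIr h B3.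
    by rewrite -e1 e2.
  rewrite /=.
  have : #|A :&: B| = 0 \/ #|A :&: B| = 2 by move: n1 n3 le3; lia.
  by case=> ->; apply/eqP.
have := mxrankM_maxl M M^T; rewrite MM mxrank1 => h.
exact: leq_trans h (rank_leq_col M).
Qed.

Lemma alpha_le_n n : (alpha31 n <= n)%N.
Proof. by apply/bigmax_leqP => S; apply: indep_le_n. Qed.


Section Construct.
Variables (n c s L : nat).
Hypotheses (s0 : 0 < s) (Lcs : L <= c * s) (cn : c + 2 * s <= n.+1).

Definition Tr (i : nat) : {set 'I_n.+1} :=
  [set inord (i %/ s); inord (c + 2 * (i %% s)); inord (c + 2 * (i %% s) + 1)].

Lemma eq_inord (y : 'I_n.+1) k : k < n.+1 -> (y == inord k) = (val y == k).
Proof. by move=> kn; rewrite -(inj_eq val_inj) /= inordK. Qed.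

Lemma bnds (i : nat) : i < L ->
  [/\ i %/ s < c, c + 2 * (i %% s) + 1 < n.+1 & i %% s < s].
Proof.
move=> iL; have ms := ltn_pmod i s0.
split => //; last by lia.
by rewrite ltn_divLR //; apply: leq_trans iL Lcs.
Qed.

Lemma memT (i : nat) (y : 'I_n.+1) : i < L ->
  (y \in Tr i) = [|| val y == i %/ s, val y == c + 2 * (i %% s) | val y == c + 2 * (i %% s) + 1].
Proof.
move=> /bnds [h1 h2 h3].
by rewrite !inE !eq_inord //; lia.
Qed.

Lemma cardTr (i : nat) : i < L -> #|Tr i| = 3.
Proof.
move=> iL; have [h1 h2 h3] := bnds iL.
rewrite /Tr setUC cardsU1 cards2 !inE -!(inj_eq val_inj) /= !inordK //; try lia.
Qed.

Lemma Tr_inj (i i' : nat) : i < L -> i' < L -> Tr i = Tr i' -> i = i'.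
Proof.
move=> iL i'L E.
have [a1 a2 a3] := bnds iL; have [b1 b2 b3] := bnds i'L.
have m1 : (inord (i %/ s) : 'I_n.+1) \in Tr i' by rewrite -E !inE eqxx.
have m2 : (inord (c + 2 * (i %% s)) : 'I_n.+1) \in Tr i' by rewrite -E !inE eqxx orbT.
move: m1 m2; rewrite !memT // /= !inordK; try lia.
Qed.

Lemma adjT (i i' : nat) : i < L -> i' < L -> adj31 (Tr i) (Tr i') -> i %/ s = i' %/ s.
Proof.
move=> iL i'L /cards1P [k E].
have [a1 a2 a3] := bnds iL; have [b1 b2 b3] := bnds i'L.
apply/eqP; apply/negPn/negP => ne.
have kin : k \in Tr i :&: Tr i' by rewrite E inE.
move: kin; rewrite inE !memT // => /andP [K1 K2].
have ej : i %% s = i' %% s by move/eqP: ne; lia.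
have p1 : (inord (c + 2 * (i %% s)) : 'I_n.+1) \in [set k].
  by rewrite -E inE !memT // /= !inordK; lia.
have p2 : (inord (c + 2 * (i %% s) + 1) : 'I_n.+1) \in [set k].
  by rewrite -E inE !memT // /= !inordK; lia.
move: p1 p2; rewrite !inE => /eqP p1 /eqP p2.
have : val (inord (c + 2 * (i %% s)) : 'I_n.+1) = val (inord (c + 2 * (i %% s) + 1) : 'I_n.+1).
  by rewrite p1 p2.
rewrite /= !inordK; lia.
Qed.

Lemma construct : exists W : {set {set 'I_n.+1}},
  [/\ W \subset Vn n.+1, #|W| = L & #|opairs (@adj31 n.+1) W| <= L * s].
Proof.
pose W := [set Tr (val i) | i : 'I_L].
exists W; split.
- apply/subsetP => x /imsetP [i _ ->]; by rewrite inE (cardTr (ltn_ord i)).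
- rewrite card_in_imset ?card_ord //.
  move=> i j _ _ /= H; apply: val_inj; exact: (Tr_inj (ltn_ord i) (ltn_ord j) H).
pose Ip := [set q : 'I_L * 'I_L | val q.1 %/ s == val q.2 %/ s].
have sub : opairs (@adj31 n.+1) W \subset [set (Tr (val q.1), Tr (val q.2)) | q in Ip].
  apply/subsetP => [[A B]]; rewrite inE /= => /andP [/andP [/imsetP [i _ ->] /imsetP [j _ ->]] ad].
  apply/imsetP; exists (i, j) => //; rewrite inE /=.
  by apply/eqP; apply: adjT.
apply: (leq_trans (subset_leq_card sub)); apply: (leq_trans (leq_imset_card _ _)).
pose g (q : 'I_L * 'I_L) : 'I_L * 'I_s := (q.1, Ordinal (ltn_pmod (val q.2) s0)).
rewrite -(card_in_imset (f := g)).
  by rewrite -[X in _ <= X * _](card_ord L) -[X in _ <= _ * X](card_ord s) -card_prod max_card.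
move=> [i j] [i' j']; rewrite !inE /= => /eqP h /eqP h' [e1 e2].
subst i'; congr (_, _); apply: val_inj => /=.
by rewrite (divn_eq j s) (divn_eq j' s) e2 -h -h'.
Qed.
End Construct.


Lemma bigminn_le (I : finType) (P : pred I) (F : I -> nat) d i0 :
  P i0 -> \big[minn/d]_(i | P i) F i <= F i0.
Proof.
move=> Pi0; have : i0 \in index_enum I by rewrite mem_index_enum.
elim: (index_enum I) => // a r IH; rewrite inE big_cons => /orP [/eqP <- | ir].
  by rewrite Pi0 geq_minl.
case: (P a); last exact: IH.
exact: leq_trans (geq_minr _ _) (IH ir).
Qed.

Lemma lowerW n (W : {set {set 'I_n}}) : W \subset Vn n ->
  #|W| ^ 2 <= alpha31 n * (2 * rW W + #|W|).
Proof.
move=> WV; rewrite [2 * _]mulnC (handshake WV).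
apply: turan; first exact: adj31_sym.
  by move=> u /(subsetP WV); apply: adj31_irr.
move=> S SW iS; apply: (@leq_bigmax_cond _ (fun S => indep31 S) (fun S => #|S|)).
by rewrite /indep31 (subset_trans SW WV); exact: iS.
Qed.

Lemma rl_lower n L : 0 < alpha31 n -> L <= #|Vn n| ->
  L ^ 2 <= alpha31 n * (2 * rl n L + L).
Proof.
move=> a0 LV; rewrite /rl.
apply: (big_ind (fun x => L ^ 2 <= alpha31 n * (2 * x + L))).
- apply: (leq_trans _ (leq_mul a0 (leqnn _))); rewrite mul1n.
  have : L ^ 2 <= #|Vn n| ^ 2 by rewrite leq_exp2r.
  lia.
- move=> x y hx hy /=.
  by rewrite /minn; case: ltnP.
- move=> W /andP [WV /eqP <-]; exact: lowerW.
Qed.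

Lemma alpha_ge1 n : 3 <= n -> 0 < alpha31 n.
Proof.
case: n => // m m3.
have := @cardTr m 1 1 1 isT isT m3 0 isT.
set A := Tr _ _ _ 0 => A3.
have AV : A \in Vn m.+1 by rewrite inE A3.
apply: (leq_trans _ (@leq_bigmax_cond _ (fun S => indep31 S) (fun S => #|S|) [set A] _)).
  by rewrite cards1.
rewrite /indep31 sub1set AV /=.
apply/forall_inP => x; rewrite inE => /eqP ->; apply/forall_inP => y; rewrite inE => /eqP ->.
exact: adj31_irr.
Qed.


Lemma construct' n c s L : 0 < s -> L <= c * s -> c + 2 * s <= n ->
  exists W : {set {set 'I_n}},
  [/\ W \subset Vn n, #|W| = L & #|opairs (@adj31 n) W| <= L * s].
Proof.
case: n => [|n] s0 h1 h2; first by lia.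
exact: (@construct n c s L s0 h1 h2).
Qed.

Lemma natpart n L K : 2 <= K -> 10 * K <= n -> 8 * K * L <= n ^ 2 ->
  exists s, [/\ 0 < s, 2 * rl n L <= L * s, L <= #|Vn n| & s * n * K <= (L + n) * K + s * n].
Proof.
move=> K2 nK gL.
have K0 : 0 < K by lia.
have tK : n %/ K * K <= n by apply: leq_trunc_div.
have tK2 : n < (n %/ K).+1 * K by apply: ltn_ceil.
move: tK tK2; set t := n %/ K; clearbody t => tK tK2.
have t2 : 2 * t <= n by apply: leq_trans tK; rewrite mulnC leq_mul2l K2 orbT.
have c0 : 0 < n - t by lia.
have c2 : n <= 2 * (n - t) by lia.
have cs1 : L <= (n - t) * (L %/ (n - t) + 1).
  by rewrite mulnDr muln1 {1}(divn_eq L (n - t)) mulnC leq_add2l ltnW // ltn_pmod.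
have cs2 : (n - t) * (L %/ (n - t) + 1) <= L + (n - t).
  by rewrite mulnDr muln1 leq_add2r mulnC leq_trunc_div.
have s0 : 0 < L %/ (n - t) + 1 by rewrite addn1.
move: cs1 cs2 s0; set s := L %/ (n - t) + 1; clearbody s => cs1 cs2 s0.
move: c0 c2 cs1 cs2; set c := n - t => c0 c2 cs1 cs2.
have sn : n * s <= 2 * L + 2 * n.
  have : n * s <= 2 * c * s by rewrite leq_mul2r c2 orbT.
  rewrite -mulnA; lia.
have n0 : 0 < n by lia.
have s4 : 4 * K * s <= n + 8 * K.
  have h : n * (8 * K * s) <= n * (2 * (n + 8 * K)).
    have e1 : n * (8 * K * s) = 8 * K * (n * s) by rewrite mulnCA mulnA.
    rewrite e1; apply: (leq_trans (leq_mul (leqnn (8 * K)) sn)).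
    have e2 : 8 * K * (2 * L + 2 * n) = 2 * (8 * K * L) + 16 * K * n by nia.
    rewrite e2; have e3 : n * (2 * (n + 8 * K)) = 2 * n ^ 2 + 16 * K * n by nia.
    rewrite e3; lia.
  rewrite leq_pmul2l // in h; lia.
have st : 2 * s <= t.
  have h : 2 * s * K < t * K + K.
    have : 2 * (2 * s * K) <= n + 8 * K by move: s4; nia.
    lia.
  have : 2 * s * K < t.+1 * K by rewrite mulSn; lia.
  rewrite ltn_pmul2r //; lia.
have [W [WV cW O]] := @construct' n c s L s0 cs1 ltac:(rewrite /c; lia).
exists s; split => //.
- have := handshake WV; rewrite -/(opairs _ W) => hs.
  have : rl n L <= rW W.
    rewrite /rl; apply: bigminn_le.
    by rewrite WV cW eqxx.
  lia.
- by rewrite -cW subset_leq_card.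
- have cK : n * K <= c * K + n.
    by rewrite /c mulnBl; lia.
  have h1 : s * (n * K) <= s * (c * K + n) := leq_mul (leqnn s) cK.
  have h2 : c * s * K <= (L + c) * K := leq_mul cs2 (leqnn K).
  have h3 : (L + c) * K <= (L + n) * K := leq_mul (leq_add (leqnn L) (leq_subr t n)) (leqnn K).
  lia.
Qed.


Unset Implicit Arguments.
Local Open Scope ring_scope.

Theorem theorem1 (f g l : nat -> nat)
  (hf : forall eps : rat, 0 < eps -> exists N : nat, forall n : nat, (N <= n)%N ->
          (n%:R : rat) <= eps * (f n)%:R)
  (hg : forall eps : rat, 0 < eps -> exists N : nat, forall n : nat, (N <= n)%N ->
          ((g n)%:R : rat) <= eps * (n ^ 2)%:R)
  (hfl : forall n : nat, (f n <= l n)%N)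
  (hlg : forall n : nat, (l n <= g n)%N) :
  forall eps : rat, 0 < eps -> exists N : nat, forall n : nat, (N <= n)%N ->
    `| ((rl n (l n))%:R : rat) - ((l n) ^ 2)%:R / (2 * (alpha31 n)%:R) |
      <= eps * (((l n) ^ 2)%:R / (2 * (alpha31 n)%:R)).
Proof.
move=> eps e0.
pose x : rat := 2 / eps + 2.
have x0 : 0 <= x.
  have : 0 < 2 / eps by apply: divr_gt0.
  rewrite /x; lra.
have xb := archi_boundP x0.
set K := (Num.Def.archi_bound x + 2)%N.
have K2 : (2 <= K)%N by rewrite /K leq_addl.
have Kx : x < K%:R by rewrite /K natrD; apply: (lt_le_trans xb); rewrite lerDl.
have epsK : 2 + 2 * eps <= eps * K%:R.
  have : eps * x = 2 + 2 * eps by rewrite /x mulrDr mulrCA divff ?mulr1 1?mulrC //; apply: lt0r_neq0.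
  move=> ex; rewrite -ex; apply: ler_wpM2l; [exact: ltW | exact: ltW].
clearbody K.
have [N1 H1] := hf (eps / 2) ltac:(by apply: divr_gt0).
have k8 : (0 : rat) < (8 * K)%:R by rewrite ltr0n; lia.
have [N2 H2] := hg (1 / (8 * K)%:R) ltac:(by apply: divr_gt0).
exists (N1 + N2 + 10 * K + 3)%N => n hn.
set L := l n.
have nL : (n%:R : rat) <= eps / 2 * L%:R.
  apply: (le_trans (H1 n ltac:(lia))); apply: ler_wpM2l; first by apply: ltW; apply: divr_gt0.
  by rewrite ler_nat; apply: hfl.
have gL : (8 * K * L <= n ^ 2)%N.
  rewrite -(ler_nat rat) natrM.
  have h := H2 n ltac:(lia).
  have h' : (8 * K)%:R * (g n)%:R <= (n ^ 2)%:R :> rat.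
    have := ler_wpM2l (ltW k8) h; rewrite mulrA div1r mulfV ?mul1r //; exact: lt0r_neq0.
  apply: (le_trans _ h'); apply: ler_wpM2l; first exact: ltW.
  by rewrite ler_nat; apply: hlg.
have [s [s0 upp LV Kineq]] := natpart (n := n) (L := L) K2 ltac:(lia) gL.
have a1 : (0 < alpha31 n)%N by apply: alpha_ge1; lia.
have an := alpha_le_n n.
have low := rl_lower a1 LV.
set R := rl n L in upp low *.
set A := alpha31 n in a1 an low *.
have a1' : (0 : rat) < A%:R by rewrite ltr0n.
move: upp low Kineq an; rewrite -!(ler_nat rat) !(natrM, natrD, natrX).
move=> upp low Kineq an; move: a1' => {}a1.
set Ar := (A%:R : rat) in upp low an a1 *.
set Rr := (R%:R : rat) in upp low *.
set Lr := (L%:R : rat) in upp low Kineq nL *.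
set nr := (n%:R : rat) in Kineq an nL *.
set sr := (s%:R : rat) in upp Kineq *.
set Kr := (K%:R : rat) in Kineq Kx epsK *.
have L0 : 0 <= Lr by rewrite /Lr ler0n.
have n0 : 0 <= nr by rewrite /nr ler0n.
have s0' : 0 <= sr by rewrite /sr ler0n.
have Kr1 : 1 < Kr by rewrite /Kr ltr1n.
have snL : sr * nr <= (1 + eps) * Lr.
  have p1 : nr * Kr <= eps / 2 * Lr * Kr by apply: ler_wpM2r => //; lra.
  have p2 : (2 + 2 * eps) * Lr <= eps * Kr * Lr by apply: ler_wpM2r.
  have : (Kr - 1) * (sr * nr - (1 + eps) * Lr) <= 0 by lra.
  rewrite pmulr_rle0; first lra.
  lra.
have QA : (Lr ^+ 2 / (2 * Ar)) * (2 * Ar) = Lr ^+ 2.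
  by rewrite divfK // mulf_neq0 // lt0r_neq0.
set Q := Lr ^+ 2 / (2 * Ar) in QA *.
have eQ : 0 <= eps by exact: ltW.
have A0 : 0 < 2 * Ar by rewrite mulr_gt0.
rewrite ler_norml; apply/andP; split.
- rewrite -subr_ge0 -(pmulr_lge0 _ A0).
  have -> : (Rr - Q - - (eps * Q)) * (2 * Ar) = Rr * (2 * Ar) - Lr ^+ 2 + eps * Lr ^+ 2.
    by rewrite -QA; ring.
  have p1 : (nr - Ar) * Lr >= 0 by apply: mulr_ge0 => //; lra.
  have p2 : (eps / 2 * Lr - nr) * Lr >= 0 by apply: mulr_ge0 => //; lra.
  have p3 : eps * Lr ^+ 2 >= 0 by apply: mulr_ge0 => //; apply: sqr_ge0.
  lra.
- rewrite -subr_ge0 -(pmulr_lge0 _ A0).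
  have -> : (eps * Q - (Rr - Q)) * (2 * Ar) = eps * Lr ^+ 2 + Lr ^+ 2 - Rr * (2 * Ar).
    by rewrite -QA; ring.
  have p1 : Ar * (Lr * sr - 2 * Rr) >= 0 by apply: mulr_ge0; lra.
  have p2 : (nr - Ar) * (Lr * sr) >= 0 by apply: mulr_ge0; [lra | apply: mulr_ge0].
  have p3 : ((1 + eps) * Lr - sr * nr) * Lr >= 0 by apply: mulr_ge0; lra.
  lra.
Qed.
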